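(* Let $V$ be a vector space over a field $F$ and $T:V\to V$ a (not necessarily linear) bijection. If $p(x)=\sum_{i=0}^m a_ix^i$ with $a_m\neq0$ is a vanishing polynomial of $T$, then the reciprocal polynomial $p^*(x)=\sum_{i=0}^m a_ix^{m-i}$ is a vanishing polynomial of $T^{-1}$. If $p_m$ is the minimal polynomial of $T$, then $p_m(0)\neq0$ and $p_m(0)^{-1}p_m^*$ is the minimal polynomial of $T^{-1}$.
   Context: For $T:V\to V$ (not necessarily linear), $T^0=I$, $T^i=T\circ T^{i-1}$, and $p(T)(v)=\sum a_iT^i(v)$ for $p(x)=\sum a_ix^i$. A vanishing polynomial of $T$ is a nonzero $p\in F[x]$ with $p(T)(v)=0$ for all $v\in V$; the minimal polynomial is the unique monic vanishing polynomial of least degree. *)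

(* Defs.v *)
From HB Require Import structures.
From mathcomp Require Import all_boot all_order all_algebra.
Set Implicit Arguments. Unset Strict Implicit. Unset Printing Implicit Defensive.
Import GRing.Theory.
Local Open Scope ring_scope.

Definition poly_app (F : fieldType) (V : lmodType F) (p : {poly F})
    (T : V -> V) (v : V) : V :=
  \sum_(i < size p) p`_i *: iter i T v.

Definition vanishing (F : fieldType) (V : lmodType F) (p : {poly F})
    (T : V -> V) : Prop :=
  p != 0 /\ forall v : V, poly_app p T v = 0.

Definition minimal_poly (F : fieldType) (V : lmodType F) (p : {poly F})
    (T : V -> V) : Prop :=
  [/\ p \is monic, vanishing p T &
      forall q : {poly F}, q \is monic -> vanishing q T -> (size p <= size q)%N].

Definition recip (F : fieldType) (p : {poly F}) : {poly F} :=
  \poly_(i < size p) p`_((size p).-1 - i).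

(* Main.v *)
Require Import Defs.
From HB Require Import structures.
From mathcomp Require Import all_boot all_order all_algebra.
Import GRing.Theory.
Local Open Scope ring_scope.

Lemma poly_app_widen {F : fieldType} {V : lmodType F} {p : {poly F}} {T : V -> V} {v n} :
  (size p <= n)%N -> poly_app p T v = \sum_(i < n) p`_i *: iter i T v.
Proof.
move=> h; rewrite /poly_app (big_ord_widen _ (fun i => p`_i *: iter i T v) h).
rewrite big_mkcond /=; apply: eq_bigr => i _; case: ifP => // /negbT.
by rewrite -leqNgt => hi; rewrite nth_default // scale0r.
Qed.

Lemma iter_cancel (V : Type) (T Tinv : V -> V) (hTinvK : cancel Tinv T) j k v :
  iter j T (iter (k + j) Tinv v) = iter k Tinv v.
Proof.
elim: j k => [|j IH] k; first by rewrite addn0.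
by rewrite iterS addnS -addSn IH iterS hTinvK.
Qed.

Lemma recip_vanish (F : fieldType) (V : lmodType F) (T Tinv : V -> V)
    (hTinvK : cancel Tinv T) (p : {poly F}) :
  vanishing p T -> vanishing (recip p) Tinv.
Proof.
move=> [pn0 hp]; split.
  apply/eqP => /(congr1 (fun q : {poly F} => q`_0)).
  rewrite /recip coef_poly coef0 size_poly_gt0 pn0 subn0 => /eqP.
  by rewrite -/(lead_coef p) lead_coef_eq0 (negPf pn0).
move=> v.
rewrite (poly_app_widen (size_poly _ _)).
set m := (size p).-1.
have hs : size p = m.+1 by rewrite /m prednK // size_poly_gt0.
rewrite -[RHS](hp (iter m Tinv v)) /poly_app /recip hs [LHS](reindex_inj rev_ord_inj) /=.
apply: eq_bigr => i _; rewrite coef_poly subSS.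
have hi : (m - i <= m)%N by rewrite leq_subr.
have hi' : (i <= m)%N by rewrite -ltnS ltn_ord.
rewrite ltnS hi subKn //; congr (_ *: _).
have -> : iter m Tinv v = iter (m - i + i) Tinv v by rewrite subnK.
by rewrite iter_cancel.
Qed.

Lemma vanishingZ (F : fieldType) (V : lmodType F) (T : V -> V) (c : F) (p : {poly F}) :
  c != 0 -> vanishing p T -> vanishing (c *: p) T.
Proof.
move=> hc [pn0 hp]; split; first by rewrite scaler_eq0 negb_or hc.
move=> v; rewrite (poly_app_widen (size_scale_leq c p)).
transitivity (c *: poly_app p T v); last by rewrite hp scaler0.
rewrite /poly_app scaler_sumr.
by apply: eq_bigr => i _; rewrite coefZ scalerA.
Qed.

Theorem mainTheorem16 (F : fieldType) (V : lmodType F) (T Tinv : V -> V)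
    (hTK : cancel T Tinv) (hTinvK : cancel Tinv T) :
  (forall p : {poly F}, vanishing p T -> vanishing (recip p) Tinv) /\
  (forall pm : {poly F}, minimal_poly pm T ->
     pm.[0] != 0 /\ minimal_poly ((pm.[0])^-1 *: recip pm) Tinv).
Proof.
split; first exact: recip_vanish.
move=> pm [mon [pn0 hp] hmin].
have h0 : pm.[0] != 0.
  rewrite horner_coef0; apply/negP => /eqP h0.
  have hsz : (1 < size pm)%N.
    rewrite ltnNge; apply/negP => hle.
    have : lead_coef pm = pm`_0.
      rewrite /lead_coef; have := size_poly_gt0 pm; rewrite pn0.
      by case: (size pm) hle => // [[|]].
    by rewrite h0 (eqP mon) => /eqP; rewrite oner_eq0.
  have [n hn] : exists n, size pm = n.+2.
    by exists (size pm).-2; case: (size pm) hsz => [|[|k]].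
  have hl : pm`_n.+1 = 1 by rewrite -(eqP mon) /lead_coef hn.
  set q := \poly_(i < n.+1) pm`_i.+1.
  have hq : size q = n.+1 by rewrite size_poly_eq //= hl oner_eq0.
  have qmon : q \is monic.
    by rewrite monicE /lead_coef hq coef_poly ltnSn hl.
  have : (size pm <= size q)%N.
    apply: hmin => //; split; first exact: monic_neq0.
    move=> v; rewrite -(hp (Tinv v)) /poly_app hq hn.
    rewrite [RHS]big_ord_recl /= h0 scale0r add0r /=.
    apply: eq_bigr => i _; rewrite coef_poly ltn_ord /=.
    by rewrite add0n -iterS iterSr hTinvK.
  by rewrite hq hn ltnn.
have [n hn] : exists n, size pm = n.+1.
  by exists (size pm).-1; rewrite prednK // size_poly_gt0.
have hrs : size (recip pm) = size pm.
  by rewrite /recip size_poly_eq // subnn -horner_coef0.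
have hlead : lead_coef (recip pm) = pm.[0].
  by rewrite /lead_coef hrs /recip hn coef_poly /= ltnSn subnn horner_coef0.
split => //; split.
- by rewrite monicE lead_coefZ hlead mulVf.
- by apply: vanishingZ; [rewrite invr_eq0 | exact: recip_vanish].
- move=> q qmon qv.
  have rq := @recip_vanish _ _ Tinv T hTK q qv.
  have rq0 : recip q != 0 by case: rq.
  have : (size pm <= size ((lead_coef (recip q))^-1 *: recip q))%N.
    apply: hmin; first by rewrite monicE lead_coefZ mulVf // lead_coef_eq0.
    by apply: vanishingZ => //; rewrite invr_eq0 lead_coef_eq0.
  rewrite size_scale ?invr_eq0 ?lead_coef_eq0 // size_scale ?invr_eq0 // hrs => h.
  exact: leq_trans h (size_poly _ _).
Qed.
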